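(* Let $\mathcal{C}=(C_1,\ldots,C_m)$ be a camera arrangement. (1) Let $L\subseteq\mathbb{P}^3$ be a line containing no center. Let $\phi_L:L\to\mathbb{P}^1$ and $\psi_i:C_i\cdot L\to\mathbb{P}^1$ ($i=1,\ldots,m$) be any linear isomorphisms, and let $\widetilde{\mathcal{C}}=(\widetilde C_1,\ldots,\widetilde C_m)$ with $\widetilde C_i=\psi_i\circ C_i\circ\phi_L^{-1}$ (a $2\times2$ matrix). Then $(\psi_1,\ldots,\psi_m):\mathcal{M}_\mathcal{C}^L\to\mathcal{M}^{1,1}_{\widetilde{\mathcal{C}}}$ is a linear isomorphism. (2) Let $X\in\mathbb{P}^3$ be distinct from all centers. Let $\phi_X:\Lambda(X)\to\mathbb{P}^2$ and $\psi_i:\Lambda(C_iX)\to\mathbb{P}^1$ ($i=1,\ldots,m$) be any linear isomorphisms, and let $\widehat{\mathcal{C}}=(\widehat C_1,\ldots,\widehat C_m)$ with $\widehat C_i=\psi_i\circ C_i\circ\phi_X^{-1}$ (a $2\times 3$ matrix). Then $(\psi_1,\ldots,\psi_m):\mathcal{L}_\mathcal{C}^X\to\mathcal{M}^{2,1}_{\widehat{\mathcal{C}}}$ is a linear isomorphism.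
   Context: All spaces are complex projective. A camera is a full-rank $3\times4$ complex matrix $C:\mathbb{P}^3\dashrightarrow\mathbb{P}^2$ with center its kernel; a camera arrangement $\mathcal{C}=(C_1,\ldots,C_m)$, $m\ge 2$, has pairwise distinct centers. For a line $L$ spanned by $u,v$, $C\cdot L:=Cu\times Cv\in\mathbb{P}^2$, identified with the image line $\{x:(C\cdot L)^Tx=0\}\subseteq\mathbb{P}^2$ (a copy of $\mathbb{P}^1$). $\Lambda(X)$ is the set of lines in $\mathbb{P}^3$ through $X$ (a plane in the Plücker embedding of the Grassmannian of lines), and for a point $y\in\mathbb{P}^2$, $\Lambda(y)$ is the set of lines in $\mathbb{P}^2$ through $y$ (a line in the dual plane); $C_i$ maps a line through $X$ not through $c_i$ to a line through $C_iX$, so $C_i\circ\phi_X^{-1}$ is a linear map $\mathbb{P}^2\dashrightarrow\Lambda(C_iX)$. $\mathcal{M}_\mathcal{C}^L$ is the Zariski closure of the image of $L\ni Y\mapsto(C_1Y,\ldots,C_mY)$; $\mathcal{L}_\mathcal{C}^X$ is the Zariski closure of the image of $\Lambda(X)\ni L'\mapsto(C_1\cdot L',\ldots,C_m\cdot L')$. For an arrangement $\widetilde{\mathcal{C}}$ of full-rank $2\times2$ matrices, $\mathcal{M}^{1,1}_{\widetilde{\mathcal{C}}}\subseteq(\mathbb{P}^1)^m$ is the Zariski closure of the image of $\mathbb{P}^1\ni Y\mapsto(\widetilde C_1Y,\ldots,\widetilde C_mY)$; for an arrangement $\widehat{\mathcal{C}}$ of full-rank $2\times 3$ matrices, $\mathcal{M}^{2,1}_{\widehat{\mathcal{C}}}\subseteq(\mathbb{P}^1)^m$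 is the Zariski closure of the image of $\mathbb{P}^2\dashrightarrow(\mathbb{P}^1)^m$, $Y\mapsto(\widehat C_1Y,\ldots,\widehat C_mY)$. A linear isomorphism means an invertible linear map. *)

(* Defs.v *)
From HB Require Import structures.
From mathcomp Require Import all_boot all_order all_algebra.
From mathcomp Require Import multinomials.mpoly.
Set Implicit Arguments. Unset Strict Implicit. Unset Printing Implicit Defensive.
Import Order.TTheory GRing.Theory.
Local Open Scope ring_scope.

Section Defs.
Variable F : closedFieldType.

Definition proj_eq n (u v : 'cV[F]_n) : Prop := exists2 a : F, a != 0 & u = a *: v.

Definition is_center (C : 'M[F]_(3,4)) (c : 'cV[F]_4) : Prop := c != 0 /\ C *m c = 0.

Definition camera_arrangement m (C : 'I_m -> 'M[F]_(3,4)) : Prop :=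
  [/\ (2 <= m)%N,
      forall i, \rank (C i) = 3%N
    & forall i j : 'I_m, i != j -> forall c d, is_center (C i) c -> is_center (C j) d ->
        ~ proj_eq c d].

Definition cross (a b : 'cV[F]_3) : 'cV[F]_3 :=
  \col_(k < 3) (a (inord ((k + 1) %% 3)) 0 * b (inord ((k + 2) %% 3)) 0
              - a (inord ((k + 2) %% 3)) 0 * b (inord ((k + 1) %% 3)) 0).

(* Pluecker coordinates of the line spanned by u, v, in the order
   (01,02,03,12,13,23) *)
Definition pl1 (k : 'I_6) : 'I_4 := inord (nth 0%N [:: 0; 0; 0; 1; 1; 2]%N k).
Definition pl2 (k : 'I_6) : 'I_4 := inord (nth 0%N [:: 1; 2; 3; 2; 3; 3]%N k).
Definition plucker (u v : 'cV[F]_4) : 'cV[F]_6 :=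
  \col_(k < 6) (u (pl1 k) 0 * v (pl2 k) 0 - u (pl2 k) 0 * v (pl1 k) 0).

(* Zariski closure in (P^n)^m, points given by representatives w : 'I_m -> F^(n+1).
   Polynomials in the m*(n+1) coordinates x_{i,j}, indexed through mxvec_index. *)
Definition mv_coords m n (w : 'I_m -> 'cV[F]_n.+1) : 'I_(m * n.+1) -> F :=
  fun t => mxvec (\matrix_(i < m, j < n.+1) w i j 0) 0 t.

Definition multihomogeneous m n (f : {mpoly F[m * n.+1]}) : Prop :=
  forall i : 'I_m, exists d : nat, forall mu, mu \in msupp f ->
    (\sum_(j < n.+1) mu (mxvec_index i j))%N = d.

Definition mv_closure m n (S : ('I_m -> 'cV[F]_n.+1) -> Prop)
    (w : 'I_m -> 'cV[F]_n.+1) : Prop :=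
  (forall i, w i != 0) /\
  forall f : {mpoly F[m * n.+1]}, multihomogeneous f ->
    (forall v, S v -> (forall i, v i != 0) -> f.@[mv_coords v] = 0) ->
    f.@[mv_coords w] = 0.

(* image of the (rational) map Y |-> (A_1 Y, ..., A_m Y), on its domain *)
Definition mv_image m n k (A : 'I_m -> 'M[F]_(k.+1, n.+1))
    (w : 'I_m -> 'cV[F]_k.+1) : Prop :=
  exists2 Y : 'cV[F]_n.+1, Y != 0 &
    forall i, A i *m Y != 0 /\ proj_eq (w i) (A i *m Y).

Definition multiview m n k (A : 'I_m -> 'M[F]_(k.+1, n.+1)) :=
  mv_closure (mv_image A).

(* M_C^L, the line L being the column space of P *)
Definition MCL m (C : 'I_m -> 'M[F]_(3,4)) (P : 'M[F]_(4,2)) :=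
  mv_closure (fun w : 'I_m -> 'cV[F]_3 =>
    exists2 Y : 'cV[F]_4, Y != 0 /\ (exists a, Y = P *m a) &
      forall i, C i *m Y != 0 /\ proj_eq (w i) (C i *m Y)).

(* L_C^X : image of lines L' = span(X, Y) through X under
   L' |-> (C_1 . L', ..., C_m . L'), C_i . L' = C_i X x C_i Y *)
Definition LCX m (C : 'I_m -> 'M[F]_(3,4)) (X : 'cV[F]_4) :=
  mv_closure (fun w : 'I_m -> 'cV[F]_3 =>
    exists2 Y : 'cV[F]_4, plucker X Y != 0 &
      forall i, cross (C i *m X) (C i *m Y) != 0 /\
                proj_eq (w i) (cross (C i *m X) (C i *m Y))).

Definition mv_lin_iso m n k (A : 'I_m -> 'M[F]_(k.+1, n.+1))
    (S : ('I_m -> 'cV[F]_n.+1) -> Prop) (T : ('I_m -> 'cV[F]_k.+1) -> Prop) : Prop :=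
  [/\ forall w, S w -> T (fun i => A i *m w i),
      forall z, T z -> exists2 w, S w & forall i, proj_eq (z i) (A i *m w i)
    & forall w w', S w -> S w' ->
        (forall i, proj_eq (A i *m w i) (A i *m w' i)) ->
        forall i, proj_eq (w i) (w' i)].

End Defs.

(* Main.v *)
Require Import Defs.
From HB Require Import structures.
From mathcomp Require Import all_boot all_order all_algebra.
From mathcomp Require Import multinomials.mpoly.
From mathcomp Require Import ring.
Set Implicit Arguments. Unset Strict Implicit. Unset Printing Implicit Defensive.
Import GRing.Theory.
Local Open Scope ring_scope.


Definition Dg (m n : nat) (i : 'I_m) (mu : 'X_{1..m * n.+1}) : nat :=
  (\sum_(j < n.+1) mu (mxvec_index i j))%N.

Definition homi (F : fieldType) (m n : nat) (i : 'I_m) (d : nat)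
  (q : {mpoly F[m * n.+1]}) : Prop :=
  forall mu, mu \in msupp q -> Dg i mu = d.

Lemma homiD (F : fieldType) m n i d (p q : {mpoly F[m * n.+1]}) :
  homi i d p -> homi i d q -> homi i d (p + q).
Proof.
move=> hp hq mu /msuppD_le; rewrite mem_cat => /orP[/hp|/hq] //.
Qed.

Lemma homi0 (F : fieldType) m n i d : homi i d (0 : {mpoly F[m * n.+1]}).
Proof. by move=> mu; rewrite msupp0. Qed.

Lemma homi_sum (F : fieldType) m n i d (I : Type) (r : seq I) (P : pred I)
  (G : I -> {mpoly F[m * n.+1]}) :
  (forall x, P x -> homi i d (G x)) -> homi i d (\sum_(x <- r | P x) G x).
Proof.
move=> h; elim: r => [|x r ih]; first by rewrite big_nil; apply: homi0.
rewrite big_cons; case: ifP => Px //; apply: homiD => //; exact: h.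
Qed.

Lemma homiZ (F : fieldType) m n i d c (p : {mpoly F[m * n.+1]}) :
  homi i d p -> homi i d (c *: p).
Proof. by move=> hp mu /msuppZ_le /hp. Qed.

Lemma DgD m n i (m1 m2 : 'X_{1..m * n.+1}) : Dg i (m1 + m2)%MM = (Dg i m1 + Dg i m2)%N.
Proof. by rewrite /Dg -big_split /=; apply: eq_bigr => j _; rewrite mnmDE. Qed.

Lemma homiM (F : fieldType) m n i d1 d2 (p q : {mpoly F[m * n.+1]}) :
  homi i d1 p -> homi i d2 q -> homi i (d1 + d2) (p * q).
Proof.
move=> hp hq mu /msuppM_le /allpairsP [[m1 m2] /= [h1 h2 ->]].
by rewrite DgD (hp _ h1) (hq _ h2).
Qed.

Lemma homi1 (F : fieldType) m n i : homi i 0 (1 : {mpoly F[m * n.+1]}).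
Proof.
move=> mu; rewrite msupp1 inE => /eqP ->.
by rewrite /Dg big1 // => j _; rewrite mnm0E.
Qed.

Lemma homiX (F : fieldType) m n i d (p : {mpoly F[m * n.+1]}) e :
  homi i d p -> homi i (d * e) (p ^+ e).
Proof.
move=> hp; elim: e => [|e ih]; first by rewrite muln0 expr0; apply: homi1.
by rewrite exprS mulnS; apply: homiM.
Qed.

Lemma homi_prod (F : fieldType) m n i N (d : 'I_N -> nat)
  (G : 'I_N -> {mpoly F[m * n.+1]}) :
  (forall t, homi i (d t) (G t)) -> homi i (\sum_t d t) (\prod_t G t).
Proof.
move=> h; elim/big_rec2: _ => [|t x y _ hy]; first exact: homi1.
exact: homiM.
Qed.

Lemma mxvec_index_eq m n (a c : 'I_m) (b e : 'I_n) :
  (mxvec_index a b == mxvec_index c e) = ((a, b) == (c, e)).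
Proof.
rewrite /mxvec_index; apply/eqP/eqP => [|->] //.
by move/cast_ord_inj/enum_rank_inj.
Qed.

Lemma homi_var (F : fieldType) m n i (p : 'I_m) (l : 'I_n.+1) :
  homi i (p == i) ('X_(mxvec_index p l) : {mpoly F[m * n.+1]}).
Proof.
move=> mu; rewrite msuppX inE => /eqP ->; rewrite /Dg.
under eq_bigr => j _ do rewrite mnm1E mxvec_index_eq.
case: (eqVneq p i) => [->|npi].
  rewrite (bigD1 l) //= eqxx big1 // => j /negbTE njl.
  by rewrite xpair_eqE eqxx /= eq_sym njl.
by rewrite big1 // => j _; rewrite xpair_eqE (negbTE npi).
Qed.



Definition pinv m n (t : 'I_(m * n)) : 'I_m * 'I_n :=
  enum_val (cast_ord (esym (mxvec_cast m n)) t).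

Lemma pinvK m n (t : 'I_(m * n)) : mxvec_index (pinv t).1 (pinv t).2 = t.
Proof.
by case/mxvec_indexP: t => i j; rewrite /pinv /mxvec_index cast_ordK enum_rankK.
Qed.

Lemma pinvE m n (i : 'I_m) (j : 'I_n) : pinv (mxvec_index i j) = (i, j).
Proof. by rewrite /pinv /mxvec_index cast_ordK enum_rankK. Qed.

Definition linp (F : closedFieldType) m n k (A : 'I_m -> 'M[F]_(k.+1, n.+1))
   (t : 'I_(m * k.+1)) : {mpoly F[m * n.+1]} :=
  \sum_(l < n.+1) A (pinv t).1 (pinv t).2 l *: 'X_(mxvec_index (pinv t).1 l).

Definition lqA (F : closedFieldType) m n k (A : 'I_m -> 'M[F]_(k.+1, n.+1)) :=
  [tuple linp A t | t < m * k.+1].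

Lemma mv_coordsE (F : closedFieldType) m n (w : 'I_m -> 'cV[F]_n.+1) i j :
  mv_coords w (mxvec_index i j) = w i j 0.
Proof. by rewrite /mv_coords mxvecE mxE. Qed.

Lemma comp_eval (F : closedFieldType) m n k (A : 'I_m -> 'M[F]_(k.+1, n.+1))
  (f : {mpoly F[m * k.+1]}) (z : 'I_m -> 'cV[F]_n.+1) :
  (f \mPo lqA A).@[mv_coords z] = f.@[mv_coords (fun i => A i *m z i)].
Proof.
rewrite comp_mpoly_meval; apply: meval_eq => t.
rewrite tnth_mktuple /linp; rewrite -[in RHS](pinvK t) mv_coordsE mxE.
rewrite raddf_sum /=; apply: eq_bigr => l _.
by rewrite mevalZ mevalXU mv_coordsE.
Qed.

Lemma Dg_reindex m n (i : 'I_m) (mu : 'X_{1..m * n.+1}) :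
  (\sum_(t < m * n.+1) (((pinv t).1 == i) * mu t))%N = Dg i mu.
Proof.
rewrite (reindex (fun p : 'I_m * 'I_n.+1 => mxvec_index p.1 p.2)) /=; last first.
  by exists (@pinv m n.+1) => [[a b] _|t _]; rewrite ?pinvE ?pinvK.
under eq_bigr => p _ do rewrite pinvE /=.
rewrite -(pair_bigA _ (fun a b => ((a == i) * mu (mxvec_index a b))%N)) /=.
rewrite (bigD1 i) //= [X in (_ + X)%N]big1 => [|a nai]; last first.
  by apply: big1 => b _; rewrite (negbTE nai).
rewrite addn0 /Dg; apply: eq_bigr => j _; by rewrite eqxx mul1n.
Qed.

Lemma comp_homog (F : closedFieldType) m n k (A : 'I_m -> 'M[F]_(k.+1, n.+1))
  (f : {mpoly F[m * k.+1]}) :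
  multihomogeneous f -> multihomogeneous (f \mPo lqA A).
Proof.
move=> hf i; have [d hd] := hf i; exists d.
rewrite comp_mpolyEX big_seq; apply: homi_sum => mu /= mu_in.
apply: homiZ; have <- : Dg i mu = d := hd mu mu_in.
rewrite comp_mpolyX -Dg_reindex.
apply: homi_prod => t; apply: homiX.
rewrite tnth_mktuple /linp; apply: homi_sum => l _; apply: homiZ.
exact: homi_var.
Qed.



Lemma closure_map (F : closedFieldType) m n k (A : 'I_m -> 'M[F]_(k.+1, n.+1))
  (S : ('I_m -> 'cV[F]_n.+1) -> Prop) (T : ('I_m -> 'cV[F]_k.+1) -> Prop) w :
  (forall v, S v -> (forall i, v i != 0) ->
     T (fun i => A i *m v i) /\ forall i, A i *m v i != 0) ->
  mv_closure S w -> (forall i, A i *m w i != 0) ->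
  mv_closure T (fun i => A i *m w i).
Proof.
move=> hST [_ hw] nz; split => // f hf hfT.
rewrite -comp_eval; apply: hw; first exact: comp_homog.
move=> v Sv nzv; rewrite comp_eval; have [Tv nzAv] := hST v Sv nzv.
exact: hfT.
Qed.

Lemma lin_constraint (F : closedFieldType) m n
  (S : ('I_m -> 'cV[F]_n.+1) -> Prop) w (i0 : 'I_m) (c : 'cV[F]_n.+1) :
  (forall v, S v -> (forall i, v i != 0) -> (v i0)^T *m c = 0) ->
  mv_closure S w -> (w i0)^T *m c = 0.
Proof.
move=> hS [_ hw].
pose p : {mpoly F[m * n.+1]} := \sum_(j < n.+1) c j 0 *: 'X_(mxvec_index i0 j).
have pE z : p.@[mv_coords z] = ((z i0)^T *m c) 0 0.
  rewrite /p raddf_sum mxE /=; apply: eq_bigr => j _.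
  by rewrite mevalZ mevalXU mv_coordsE mxE mulrC.
have hp : multihomogeneous p.
  move=> i; exists (i0 == i) => mu; apply: homi_sum => j _.
  by apply: homiZ; apply: homi_var.
apply/matrixP => a b; rewrite !ord1 [RHS]mxE -pE; apply: hw => // v Sv nzv.
by rewrite pE (hS v Sv nzv) mxE.
Qed.

Lemma iso_gen (F : closedFieldType) m n k (A : 'I_m -> 'M[F]_(k.+1, n.+1))
  (B : 'I_m -> 'M[F]_(n.+1, k.+1))
  (S : ('I_m -> 'cV[F]_n.+1) -> Prop) (T : ('I_m -> 'cV[F]_k.+1) -> Prop) :
  (forall i, A i *m B i = 1%:M) ->
  (forall w, mv_closure S w -> forall i, B i *m (A i *m w i) = w i) ->
  (forall v, S v -> (forall i, v i != 0) ->
     T (fun i => A i *m v i) /\ forall i, A i *m v i != 0) ->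
  (forall t, T t -> (forall i, t i != 0) ->
     S (fun i => B i *m t i) /\ forall i, B i *m t i != 0) ->
  mv_lin_iso A (mv_closure S) (mv_closure T).
Proof.
move=> AB BA h1 h2.
have nzA w : mv_closure S w -> forall i, A i *m w i != 0.
  move=> cw i; apply: contraNneq (cw.1 i) => e.
  by rewrite -(BA w cw i) e mulmx0.
split.
- by move=> w cw; apply: (closure_map h1 cw (nzA w cw)).
- move=> z cz; exists (fun i => B i *m z i).
    apply: (closure_map h2 cz) => i; apply: contraNneq (cz.1 i) => e.
    by rewrite -[z i]mul1mx -(AB i) -mulmxA e mulmx0.
  by move=> i; exists 1; rewrite ?oner_eq0 // scale1r mulmxA AB mul1mx.
- move=> w w' cw cw' he i; have [a a0 e] := he i; exists a => //.
  by rewrite -(BA w cw i) -(BA w' cw' i) e -scalemxAr.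
Qed.



Lemma unit_of_inj (F : fieldType) n (M : 'M[F]_n) :
  (forall v : 'cV_n, M *m v = 0 -> v = 0) -> M \in unitmx.
Proof.
move=> h; rewrite unitmxE unitfE -det_tr; apply/det0P => -[v nzv vM].
have : M *m v^T = 0 by rewrite -[M]trmxK -trmx_mul vM trmx0.
move/h => /(congr1 trmx); rewrite trmxK trmx0 => v0.
by rewrite v0 eqxx in nzv.
Qed.

Lemma inj_of_rank (F : fieldType) p q (A : 'M[F]_(p, q)) :
  \rank A = q -> forall v : 'cV_q, A *m v = 0 -> v = 0.
Proof.
move=> rA v Av; have fr : row_free A^T by rewrite /row_free mxrank_tr rA.
apply: trmx_inj; apply: (row_free_inj fr).
by rewrite -trmx_mul Av !trmx0 mul0mx.
Qed.

Lemma cross_orth (F : closedFieldType) (a b : 'cV[F]_3) : (cross a b)^T *m a = 0.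
Proof.
apply/matrixP => i j; rewrite !ord1 !mxE !big_ord_recr big_ord0 /= !mxE /=.
have -> : widen_ord (leqnSn 2) (widen_ord (leqnSn 1) ord_max) = inord 0 :> 'I_3.
  by apply/val_inj; rewrite /= inordK.
have -> : widen_ord (leqnSn 2) ord_max = inord 1 :> 'I_3.
  by apply/val_inj; rewrite /= inordK.
have -> : ord_max = inord 2 :> 'I_3.
  by apply/val_inj; rewrite /= inordK.
have m1 : ((0 + 1) %% 3 = 1)%N by [].
have m2 : ((0 + 2) %% 3 = 2)%N by [].
have m3 : ((1 + 2) %% 3 = 0)%N by [].
have m4 : ((2 + 1) %% 3 = 0)%N by [].
have m5 : ((2 + 2) %% 3 = 1)%N by [].
rewrite ?m1 ?m2 ?m3 ?m4 ?m5; ring.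
Qed.



Lemma part1 (F : closedFieldType) (m : nat) (C : 'I_m -> 'M[F]_(3,4)) :
  (forall P : 'M[F]_(4,2), \rank P = 2%N ->
   (forall i c, is_center (C i) c -> ~ (exists a, c = P *m a)) ->
   forall Psi : 'I_m -> 'M[F]_(2,3),
   (forall i (y : 'cV[F]_3), (exists a, y = C i *m P *m a) -> Psi i *m y = 0 -> y = 0) ->
   let Ct := fun i => Psi i *m (C i *m P) in
   (forall w, MCL C P w -> forall i, exists a, w i = C i *m P *m a) /\
   mv_lin_iso Psi (MCL C P) (multiview Ct)).
Proof.
move=> P rP noc Psi hPsi Ct.
have Pinj : forall a : 'cV_2, P *m a = 0 -> a = 0 := inj_of_rank rP.
have Ctinj i (a : 'cV_2) : Ct i *m a = 0 -> a = 0.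
  move=> e; have : C i *m P *m a = 0.
    by apply: (hPsi i); [exists a | rewrite mulmxA].
  rewrite -mulmxA => CPa; apply: Pinj; apply/eqP; apply: contraT => nz.
  by exfalso; apply: (noc i (P *m a)); [split | exists a].
have Ctu i : Ct i \in unitmx := unit_of_inj (Ctinj i).
pose B i := C i *m P *m invmx (Ct i).
have colsp : forall w, MCL C P w -> forall i, exists a, w i = C i *m P *m a.
  move=> w cw i; pose M := C i *m P.
  have hK : (w i)^T *m cokermx M^T = 0.
    apply/matrixP => r c; rewrite ord1 [RHS]mxE.
    have hc : (w i)^T *m col c (cokermx M^T) = 0.
      apply: (lin_constraint _ cw) => v [Y [nzY [a eY]] hv] nzv.
      have [_ [s s0 ->]] := hv i.
      have sub : ((s *: (C i *m Y))^T <= M^T)%MS.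
        by rewrite linearZ /= scalemx_sub // eY mulmxA trmx_mul submxMl.
      move: sub; rewrite submxE => /eqP h0.
      by rewrite colE mulmxA h0 mul0mx.
    transitivity (((w i)^T *m col c (cokermx M^T)) 0 0); last by rewrite hc mxE.
    by rewrite !mxE; apply: eq_bigr => j _; rewrite !mxE.
  have : ((w i)^T <= M^T)%MS by rewrite submxE hK.
  case/submxP => D eD; exists D^T.
  by rewrite -[w i]trmxK eD trmx_mul trmxK.
split; first exact colsp.
apply: (iso_gen (B := B)).
- by move=> i; rewrite /B mulmxA; exact: (mulmxV (Ctu i)).
- move=> w cw i; have [a ->] := colsp w cw i.
  have -> : Psi i *m (C i *m P *m a) = Ct i *m a by rewrite /Ct !mulmxA.
  by rewrite /B -(mulmxA _ (invmx _)) (mulKmx (Ctu i)).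
- move=> v [Y [nzY [a eY]] hv] nzv.
  have nza : a != 0 by apply: contraNneq nzY => a0; rewrite eY a0 mulmx0.
  have Cta i : Ct i *m a != 0 by apply: contraNneq nza => /Ctinj ->.
  have ev i : exists2 s, s != 0 & Psi i *m v i = s *: (Ct i *m a).
    have [_ [s s0 es]] := hv i; exists s => //.
    by rewrite es -scalemxAr /Ct eY !mulmxA.
  split; first by exists a => // i; have [s s0 es] := ev i; split => //; exists s.
  by move=> i; have [s s0 ->] := ev i; rewrite scalemx_eq0 negb_or s0 Cta.
- move=> t [b nzb ht] nzt.
  have e i : exists2 s, s != 0 & B i *m t i = s *: (C i *m (P *m b)).
    have [_ [s s0 ->]] := ht i; exists s => //.
    by rewrite -scalemxAr /B -(mulmxA _ (invmx _)) (mulKmx (Ctu i)) mulmxA.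
  have CPb i : C i *m (P *m b) != 0.
    apply: contraNneq nzb => h; apply/eqP; apply: (Ctinj i).
    by rewrite /Ct -!mulmxA h mulmx0.
  split.
    exists (P *m b); first by split; [apply: contraNneq nzb => /Pinj -> | exists b].
    by move=> i; split; [exact: CPb | have [s s0 es] := e i; exists s].
  by move=> i; have [s s0 ->] := e i; rewrite scalemx_eq0 negb_or s0 CPb.
Qed.



Lemma part2 (F : closedFieldType) (m : nat) (C : 'I_m -> 'M[F]_(3,4)) :
  (forall X : 'cV[F]_4, X != 0 ->
   (forall i c, is_center (C i) c -> ~ proj_eq X c) ->
   forall Q : 'M[F]_(6,3), \rank Q = 3%N ->
   (forall a, exists Y, Q *m a = plucker X Y) ->
   (forall Y, exists a, plucker X Y = Q *m a) ->
   forall Psi : 'I_m -> 'M[F]_(2,3),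
   (forall i (l : 'cV[F]_3), l^T *m (C i *m X) = 0 -> Psi i *m l = 0 -> l = 0) ->
   forall Ch : 'I_m -> 'M[F]_(2,3),
   (forall i a Y, Q *m a = plucker X Y ->
      Ch i *m a = Psi i *m cross (C i *m X) (C i *m Y)) ->
   (forall w, LCX C X w -> forall i, (w i)^T *m (C i *m X) = 0) /\
   mv_lin_iso Psi (LCX C X) (multiview Ch)).
Proof.
move=> X nzX noc Q rQ hQ1 hQ2 Psi hPsi Ch hCh.
have orth : forall w, LCX C X w -> forall i, (w i)^T *m (C i *m X) = 0.
  move=> w cw i; apply: (lin_constraint _ cw) => v [Y nzp hv] nzv.
  have [_ [s s0 ->]] := hv i.
  by rewrite linearZ /= -scalemxAl cross_orth scaler0.
split; first exact orth.
pose M i : 'M[F]_3 := col_mx (Psi i) (C i *m X)^T.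
have Mu i : M i \in unitmx.
  apply: unit_of_inj => l; rewrite /M (mul_col_mx (Psi i) _ l) => e.
  have /eqP := e; rewrite (col_mx_eq0 (Psi i *m l)) => /andP[/eqP h1 /eqP h2].
  apply: (hPsi i) => //.
  by rewrite -[l^T *m _]trmxK trmx_mul trmxK h2 trmx0.
pose B i := invmx (M i) *m col_mx (1%:M : 'M[F]_2) (0 : 'M[F]_(1,2)).
have Pi i (l : 'cV[F]_3) : l^T *m (C i *m X) = 0 -> B i *m (Psi i *m l) = l.
  move=> hl; have e : M i *m l = col_mx 1%:M 0 *m (Psi i *m l).
    rewrite /M (mul_col_mx (Psi i) _ l) mul_col_mx mul1mx mul0mx.
    suff -> : (C i *m X)^T *m l = 0 by [].
    by rewrite -[_ *m l]trmxK trmx_mul trmxK hl trmx0.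
  by rewrite /B -mulmxA -e mulKmx.
have AB i : Psi i *m B i = 1%:M.
  have : M i *m B i = col_mx (1%:M : 'M[F]_2) (0 : 'M[F]_(1,2)) by rewrite /B mulmxA mulmxV // mul1mx.
  by rewrite /M (mul_col_mx (Psi i) _ (B i)) => e; have [-> _] := @eq_col_mx _ 2 1 2 _ _ _ _ e.
apply: (iso_gen (B := B)) => //.
- by move=> w cw i; apply: Pi; apply: orth.
- move=> v [Y nzp hv] nzv; have [a ea] := hQ2 Y.
  have nza : a != 0 by apply: contraNneq nzp => a0; rewrite ea a0 mulmx0.
  pose cr i := cross (C i *m X) (C i *m Y).
  have crPi i : (cr i)^T *m (C i *m X) = 0 := cross_orth _ _.
  have Psinz i : Psi i *m cr i != 0.
    have [nz _] := hv i; apply: contraNneq nz => /(hPsi i _ (crPi i)) h; exact/eqP.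
  have Cha i : Ch i *m a = Psi i *m cr i := hCh i a Y (esym ea).
  split.
    exists a => // i; split; first by rewrite Cha.
    by have [_ [s s0 ->]] := hv i; exists s => //; rewrite Cha -scalemxAr.
  by move=> i; have [_ [s s0 ->]] := hv i; rewrite -scalemxAr scalemx_eq0 negb_or s0 Psinz.
- move=> t [b nzb ht] nzt; have [Y eY] := hQ1 b.
  have nzp : plucker X Y != 0.
    by rewrite -eY; apply: contraNneq nzb => /(inj_of_rank rQ) ->.
  pose cr i := cross (C i *m X) (C i *m Y).
  have Chb i : Ch i *m b = Psi i *m cr i := hCh i b Y eY.
  have e i : exists2 s, s != 0 & B i *m t i = s *: cr i.
    have [_ [s s0 ->]] := ht i; exists s => //.
    by rewrite -scalemxAr Chb Pi // cross_orth.
  have crnz i : cr i != 0.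
    have [nz _] := ht i; apply: contraNneq nz => h.
    by rewrite Chb h mulmx0.
  split.
    by exists Y => // i; split; [exact: crnz | have [s s0 es] := e i; exists s].
  by move=> i; have [s s0 ->] := e i; rewrite scalemx_eq0 negb_or s0 crnz.
Qed.

Theorem theorem1p3 (F : closedFieldType) (m : nat) (C : 'I_m -> 'M[F]_(3,4)) :
  camera_arrangement C ->
  (* (1) L = column space of P, phi_L^{-1} = P, psi_i = restriction of Psi i *)
  (forall P : 'M[F]_(4,2), \rank P = 2%N ->
   (forall i c, is_center (C i) c -> ~ (exists a, c = P *m a)) ->
   forall Psi : 'I_m -> 'M[F]_(2,3),
   (forall i (y : 'cV[F]_3), (exists a, y = C i *m P *m a) -> Psi i *m y = 0 -> y = 0) ->
   let Ct := fun i => Psi i *m (C i *m P) in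
   (forall w, MCL C P w -> forall i, exists a, w i = C i *m P *m a) /\
   mv_lin_iso Psi (MCL C P) (multiview Ct)) /\
  (* (2) phi_X^{-1} = Q (onto the Pluecker plane Lambda(X)),
         psi_i = restriction of Psi i to Lambda(C_i X) *)
  (forall X : 'cV[F]_4, X != 0 ->
   (forall i c, is_center (C i) c -> ~ proj_eq X c) ->
   forall Q : 'M[F]_(6,3), \rank Q = 3%N ->
   (forall a, exists Y, Q *m a = plucker X Y) ->
   (forall Y, exists a, plucker X Y = Q *m a) ->
   forall Psi : 'I_m -> 'M[F]_(2,3),
   (forall i (l : 'cV[F]_3), l^T *m (C i *m X) = 0 -> Psi i *m l = 0 -> l = 0) ->
   forall Ch : 'I_m -> 'M[F]_(2,3),
   (forall i a Y, Q *m a = plucker X Y ->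
      Ch i *m a = Psi i *m cross (C i *m X) (C i *m Y)) ->
   (forall w, LCX C X w -> forall i, (w i)^T *m (C i *m X) = 0) /\
   mv_lin_iso Psi (LCX C X) (multiview Ch)).
Proof.
move=> _; split; [exact: part1 | exact: part2].
Qed.
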